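(* Let $k\ge 2$ be an integer. For any $\epsilon\in(0,1)$, let $N$ be the integer part of $1/\epsilon$. Then $\widetilde{Z}_k(N+1)\le Z_k(\epsilon)\le \widetilde{Z}_k(N)$.
   Context: $\mu_{k+1}(q)$ denotes the indicator function of the $(k+1)$-free positive integers (not divisible by $p^{k+1}$ for any prime $p$); $p$ always denotes a prime. For $\epsilon\in(0,1)$, \[ Z_k(\epsilon)=\sum_{q\ge 1/\epsilon}\mu_{k+1}(q)\sum_{\substack{1\le m\le q\epsilon\\ \gcd(m,q)=1}}\ \prod_{p\mid q}\frac{1}{(p^k-1)^2} \] (this is the normalized diffraction intensity $\nu_k((0,\epsilon])/\nu_k(\{0\})$ of the $k$-free integers). For $N\in\mathbb{N}$, \[ \widetilde{Z}_k(N):=\sum_{q\in\mathbb{N}}\mu_{k+1}(q)\Bigl(\prod_{p\mid q}\frac{1}{(p^k-1)^2}\Bigr)\#\{m\in\mathbb{N}\cap[1,q/N]:\gcd(m,q)=1\}. \] *)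

(* Defs.v *)
From mathcomp Require Import all_boot all_order all_algebra.
From mathcomp Require Import reals ereal sequences.
Set Implicit Arguments. Unset Strict Implicit. Unset Printing Implicit Defensive.
Import Order.TTheory GRing.Theory Num.Theory.
Local Open Scope ring_scope.

Definition jfree (j q : nat) : bool :=
  (0 < q)%N && all (fun p => ~~ (p ^ j %| q)%N) (primes q).

Definition wprod {R : realType} (k q : nat) : R :=
  \prod_(p <- primes q) (((p ^ k)%:R - 1) ^+ 2)^-1.

(* #{ m in N : 1 <= m <= q*eps, gcd(m,q) = 1 }  (note: such m are <= q when eps < 1) *)
Definition cnt_eps {R : realType} (eps : R) (q : nat) : nat :=
  \sum_(1 <= m < q.+1 | coprime m q && (m%:R <= q%:R * eps)) 1.

(* #{ m in N cap [1, q/N] : gcd(m,q) = 1 }  (m <= q/N <= q for N >= 1) *)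
Definition cnt_N {R : realType} (N q : nat) : nat :=
  \sum_(1 <= m < q.+1 | coprime m q && ((m%:R : R) <= q%:R / N%:R)) 1.

Definition Zk {R : realType} (k : nat) (eps : R) : \bar R :=
  (\sum_(0 <= q <oo)
     (if jfree k.+1 q && (eps^-1 <= q%:R)
      then (cnt_eps eps q)%:R * wprod k q else 0)%:E)%E.

Definition Ztk {R : realType} (k N : nat) : \bar R :=
  (\sum_(0 <= q <oo)
     (if jfree k.+1 q then (cnt_N (R:=R) N q)%:R * wprod k q else 0)%:E)%E.

(* Main.v *)
Require Import Defs.
From mathcomp Require Import all_boot all_order all_algebra.
From mathcomp Require Import reals ereal sequences.
Import Order.TTheory GRing.Theory Num.Theory.
Local Open Scope ring_scope.

Lemma wprod_ge0 (R : realType) k q : 0 <= wprod (R:=R) k q.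
Proof.
rewrite /wprod; apply: prodr_ge0 => p _.
by rewrite invr_ge0 sqr_ge0.
Qed.

Lemma cnt_le (P Q : pred nat) q :
  (forall m, P m -> Q m) ->
  (\sum_(1 <= m < q.+1 | P m) 1 <= \sum_(1 <= m < q.+1 | Q m) 1)%N.
Proof.
move=> PQ; rewrite [X in (X <= _)%N]big_mkcond [X in (_ <= X)%N]big_mkcond.
apply: leq_sum => m _; case: (boolP (P m)) => Pm //.
by rewrite PQ.
Qed.

Theorem lemma2p1 (R : realType) (k : nat) (eps : R) (N : nat) :
  (2 <= k)%N -> 0 < eps < 1 ->
  N%:R <= eps^-1 < N.+1%:R ->
  (Ztk (R:=R) k N.+1 <= Zk k eps /\ Zk k eps <= Ztk (R:=R) k N)%E.
Proof.
move=> _ /andP[e0 e1] /andP[Ne eN].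
have N0 : (0 < N)%N.
  rewrite lt0n; apply/negP => /eqP N0; move: eN; rewrite N0.
  by rewrite ltNge ltW // invf_gt1.
have NR0 : 0 < N%:R :> R by rewrite ltr0n.
have eNi : eps <= N%:R^-1.
  by rewrite -[eps]invrK lef_pV2 // ?posrE ?invr_gt0.
split; rewrite /Ztk /Zk; (apply: lee_nneseries; [move=> i _ _|move=> n _]).
- case: ifP => _; rewrite ?lee_fin ?mulr_ge0 ?wprod_ge0 //.
- case: ifP => // Jq.
  case: ifP => qe /=.
    rewrite lee_fin.
    apply: ler_wpM2r; first exact: wprod_ge0.
    rewrite ler_nat /cnt_N /cnt_eps; apply: cnt_le => m /andP[-> /= H].
    apply: (le_trans H); apply: ler_wpM2l => //.
    by rewrite ltW // -(invrK eps) ltf_pV2 // ?posrE ?invr_gt0 // ?ltr0n.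
  have -> : cnt_N (R:=R) N.+1 n = 0%N.
    rewrite /cnt_N big_nat_cond big_pred0 // => m.
    apply/negP => /andP[/andP[m1 _] /andP[_ H]].
    move: H; rewrite ler_pdivlMr ?ltr0n // => H.
    have : n%:R < N.+1%:R :> R.
      apply: lt_trans eN; rewrite ltNge; apply/negP => h; by rewrite h in qe.
    rewrite ltr_nat => nN.
    move: H; rewrite -natrM ler_nat => H.
    have : (N.+1 <= n)%N by apply: leq_trans H; rewrite leq_pmull.
    by rewrite leqNgt nN.
  by rewrite mul0r lee_fin.
- case: ifP => _; rewrite ?lee_fin ?mulr_ge0 ?wprod_ge0 //.
- case: ifP => [/andP[Jq qe]|_]; last by case: ifP => _; rewrite lee_fin ?mulr_ge0 ?wprod_ge0.
  rewrite Jq lee_fin.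
  apply: ler_wpM2r; first exact: wprod_ge0.
  rewrite ler_nat /cnt_N /cnt_eps; apply: cnt_le => m /andP[-> /= H].
  exact: (le_trans H (ler_wpM2l (ler0n R n) eNi)).
Qed.
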